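(* Let $\Omega$ be a set, $q$ a set of operations on $\Omega$, and $\Pi$ a set of similarities on $\Omega$ that is a monoid with involution. Then: (1) if $\approx_\Pi\in\Pi$, then $\approx_\Pi$ equals $\sim_{\mathrm{Inv}(\Pi)}$; (2) $\sim_q$ equals $\approx_{\mathrm{Sim}(q)}$.
   Context: A similarity on $\Omega$ is a relation $\pi\subseteq\Omega\times\Omega$ such that every $a$ has some $b$ with $a\pi b$ and every $b$ has some $a$ with $a\pi b$; $\bar a\,\pi\,\bar b$ means coordinatewise relatedness; for relations $R,S\subseteq\Omega^k$, $R\,\pi\,S$ means $\bar a\pi\bar b$ implies ($\bar a\in R\iff\bar b\in S$). A monoid with involution is a set of similarities closed under composition and converses. A set of operations is a set of finitary relations and quantifiers (subsets of $\mathcal P(\Omega^{k_1})\times\cdots\times\mathcal P(\Omega^{k_l})$) on $\Omega$; $\mathscr L^-_{\infty\infty}(q)$ is the equality-free infinitary logic with predicate and Lindström quantifier symbols for members of $q$. $a\sim_q b$ iff for all formulas $\phi(x,\bar y)$ of $\mathscr L^-_{\infty\infty}(q)$ and tuples $\bar c$ from $\Omega$, $\phi(a,\bar c)\iff\phi(b,\bar c)$. $a\approx_\Pi b$ iff for every finite $k$ and $\bar c\in\Omega^k$ some $\pi\in\Pi$ has $(a,\bar c)\,\pi\,(b,\bar c)$. A relation $R$ is invariant under a similarity or equivalence relation $\rho$ if $\bar a\rho\bar b$ implies $\bar a\in R\iff\bar b\in R$; a quantifier $Q$ is $\sim$-invariant under $\pi$ if for all $\bar R,\bar S$ of its type with each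 component invariant under $\sim$ and $R_i\,\pi\,S_i$: $\bar R\in Q\iff\bar S\in Q$. $\mathrm{Inv}(\Pi)$: all relations invariant under every $\pi\in\Pi$ and all quantifiers $\approx_\Pi$-invariant under every $\pi\in\Pi$. $\mathrm{Sim}(q)$: all similarities $\pi$ under which every relation of $q$ is invariant and every quantifier of $q$ is $\sim_q$-invariant. *)

(* Defs.v *)
From mathcomp Require Import all_boot.
Set Implicit Arguments. Unset Strict Implicit. Unset Printing Implicit Defensive.

Definition relk (Om : Type) (k : nat) := k.-tuple Om -> Prop.

(* Operations: finitary relations, and (Lindstrom) quantifiers of type
   (ks 0, ..., ks (l-1)), i.e. subsets of P(Om^{k_0}) x ... x P(Om^{k_{l-1}}). *)
Inductive Op (Om : Type) : Type :=
| ORel (k : nat) (R : relk Om k)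
| OQuant (l : nat) (ks : 'I_l -> nat)
         (Q : (forall i : 'I_l, relk Om (ks i)) -> Prop).

Arguments ORel {Om} k R.
Arguments OQuant {Om} l ks Q.

Definition opset (Om : Type) := Op Om -> Prop.

Definition sumas (V W Om : Type) (s : V -> Om) (t : W -> Om) : V + W -> Om :=
  fun v => match v with inl x => s x | inr w => t w end.

(* Formulas of the equality-free infinitary logic L^-_{oo oo}(q), with
   free variables ranging over the type V.  Quantified blocks of variables
   (for existential quantification and for Lindstrom quantifiers) are
   represented by extending the variable type. *)
Inductive form (Om : Type) (q : opset Om) : Type -> Type :=
| FAtom (V : Type) (k : nat) (R : relk Om k) (H : q (ORel k R))
        (args : k.-tuple V) : form q V
| FNot (V : Type) (phi : form q V) : form q V
| FAnd (V : Type) (I : Type) (phis : I -> form q V) : form q V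
| FEx (V : Type) (W : Type) (phi : form q (V + W)) : form q V
| FQuant (V : Type) (l : nat) (ks : 'I_l -> nat)
         (Q : (forall i : 'I_l, relk Om (ks i)) -> Prop)
         (H : q (OQuant l ks Q))
         (phis : forall i : 'I_l, form q (V + 'I_(ks i))) : form q V.

Fixpoint sat (Om : Type) (q : opset Om) (V : Type) (phi : form q V)
  {struct phi} : (V -> Om) -> Prop :=
  match phi in form _ V' return (V' -> Om) -> Prop with
  | FAtom _ k R _ args => fun s => R (map_tuple s args)
  | FNot _ psi => fun s => ~ sat psi s
  | FAnd _ J psis => fun s => forall j : J, sat (psis j) s
  | FEx _ W psi => fun s => exists t : W -> Om, sat psi (sumas s t)
  | FQuant _ l ks Q _ psis => fun s =>
      Q (fun i (t : (ks i).-tuple Om) => sat (psis i) (sumas s (tnth t)))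
  end.

Definition simq (Om : Type) (q : opset Om) (a b : Om) : Prop :=
  forall (k : nat) (phi : form q (unit + 'I_k)) (c : k.-tuple Om),
    sat phi (sumas (fun _ => a) (tnth c)) <-> sat phi (sumas (fun _ => b) (tnth c)).

Definition similarity (Om : Type) (pi : Om -> Om -> Prop) : Prop :=
  (forall a, exists b, pi a b) /\ (forall b, exists a, pi a b).

Definition reltup (Om : Type) (pi : Om -> Om -> Prop) (k : nat)
  (a b : k.-tuple Om) : Prop := forall i : 'I_k, pi (tnth a i) (tnth b i).

Definition relsim (Om : Type) (pi : Om -> Om -> Prop) (k : nat)
  (R S : relk Om k) : Prop :=
  forall a b : k.-tuple Om, reltup pi a b -> (R a <-> S b).

Definition rel_inv (Om : Type) (rho : Om -> Om -> Prop) (k : nat)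
  (R : relk Om k) : Prop :=
  forall a b : k.-tuple Om, reltup rho a b -> (R a <-> R b).

Definition quant_inv (Om : Type) (eqv pi : Om -> Om -> Prop) (l : nat)
  (ks : 'I_l -> nat) (Q : (forall i : 'I_l, relk Om (ks i)) -> Prop) : Prop :=
  forall Rs Ss : forall i : 'I_l, relk Om (ks i),
    (forall i, rel_inv eqv (Rs i)) -> (forall i, rel_inv eqv (Ss i)) ->
    (forall i, relsim pi (Rs i) (Ss i)) -> (Q Rs <-> Q Ss).

Definition rcomp (Om : Type) (pi rho : Om -> Om -> Prop) : Om -> Om -> Prop :=
  fun a c => exists b, pi a b /\ rho b c.

Definition rconv (Om : Type) (pi : Om -> Om -> Prop) : Om -> Om -> Prop :=
  fun a b => pi b a.

Definition monoid_inv (Om : Type) (Pi : (Om -> Om -> Prop) -> Prop) : Prop :=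
  (forall pi, Pi pi -> similarity pi) /\
  (forall pi rho, Pi pi -> Pi rho -> Pi (rcomp pi rho)) /\
  (forall pi, Pi pi -> Pi (rconv pi)).

Definition approxP (Om : Type) (Pi : (Om -> Om -> Prop) -> Prop) (a b : Om) : Prop :=
  forall (k : nat) (c : k.-tuple Om),
    exists pi, Pi pi /\ reltup pi [tuple of a :: c] [tuple of b :: c].

Definition Inv (Om : Type) (Pi : (Om -> Om -> Prop) -> Prop) : opset Om :=
  fun o => match o with
  | ORel k R => forall pi, Pi pi -> rel_inv pi R
  | OQuant l ks Q => forall pi, Pi pi -> quant_inv (approxP Pi) pi Q
  end.

Definition Sim (Om : Type) (q : opset Om) (pi : Om -> Om -> Prop) : Prop :=
  similarity pi /\
  (forall k (R : relk Om k), q (ORel k R) -> rel_inv pi R) /\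
  (forall l ks (Q : (forall i : 'I_l, relk Om (ks i)) -> Prop),
      q (OQuant l ks Q) -> quant_inv (simq q) pi Q).

(* Main.v *)
Require Import Defs.
From mathcomp Require Import all_boot.
From Stdlib Require Import ClassicalEpsilon FunctionalExtensionality PropExtensionality.

Definition sarg {k} (i : 'I_k.+1) : unit + 'I_k :=
  match unlift ord0 i with None => inl tt | Some j => inr j end.

Lemma tnth_cons_split (Om : Type) k (x : Om) (c : k.-tuple Om) (i : 'I_k.+1) :
  tnth [tuple of x :: c] i = sumas (fun _ : unit => x) (tnth c) (sarg i).
Proof.
rewrite /sarg; case: unliftP => [j ->|->] /=.
- by rewrite (tnth_nth x) (tnth_nth x) lift0.
- by rewrite (tnth_nth x).
Qed.

Lemma reltup_cons (Om : Type) (pi : Om -> Om -> Prop) k (a b : Om) (c : k.-tuple Om) :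
  reltup pi [tuple of a :: c] [tuple of b :: c] <->
  forall v, pi (sumas (fun _ : unit => a) (tnth c) v) (sumas (fun _ : unit => b) (tnth c) v).
Proof.
split.
- move=> H [[]|j].
  + by have := H ord0; rewrite !tnth_cons_split /sarg unlift_none.
  + by have := H (lift ord0 j); rewrite !tnth_cons_split /sarg liftK.
- by move=> H i; rewrite !tnth_cons_split; apply: H.
Qed.

Lemma sat_inv (Om : Type) (q : opset Om) (P : (Om -> Om -> Prop) -> Prop)
  (E : Om -> Om -> Prop)
  (Hsim : forall pi, P pi -> similarity pi)
  (Hrel : forall pi, P pi -> forall k (R : relk Om k), q (ORel k R) -> rel_inv pi R)
  (Hq : forall pi, P pi -> forall l ks Q, q (OQuant l ks Q) -> quant_inv E pi Q)
  (HE : P E) (HErefl : forall x, E x x) :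
  forall V (phi : form q V) pi, P pi -> forall s t : V -> Om,
    (forall v, pi (s v) (t v)) -> (sat phi s <-> sat phi t).
Proof.
move=> V phi; induction phi as [V k R HR args|V psi IH|V I psis IH|V W psi IH|V l ks Q HQ psis IH]
  => pi Ppi s t Hst /=.
- apply: (Hrel pi Ppi k R HR) => i; rewrite !tnth_map; exact: Hst.
- have := IH pi Ppi s t Hst; tauto.
- split=> H j; have := IH j pi Ppi s t Hst; have := H j; tauto.
- have [f1 f2] := Hsim pi Ppi; split.
  + case=> t1 H1.
    exists (fun w => proj1_sig (constructive_indefinite_description _ (f1 (t1 w)))).
    apply/(IH pi Ppi (sumas s t1)) => //.
    case=> [v|w] /=; [exact: Hst | exact: (proj2_sig (constructive_indefinite_description _ (f1 (t1 w))))].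
  + case=> t2 H2.
    exists (fun w => proj1_sig (constructive_indefinite_description _ (f2 (t2 w)))).
    apply/(IH pi Ppi _ (sumas t t2)) => //.
    case=> [v|w] /=; [exact: Hst | exact: (proj2_sig (constructive_indefinite_description _ (f2 (t2 w))))].
- apply: (Hq pi Ppi l ks Q HQ).
  + move=> i a b Hab; apply: (IH i E HE) => -[v|j] /=; [exact: HErefl | exact: Hab j].
  + move=> i a b Hab; apply: (IH i E HE) => -[v|j] /=; [exact: HErefl | exact: Hab j].
  + move=> i a b Hab; apply: (IH i pi Ppi) => -[v|j] /=; [exact: Hst | exact: Hab j].
Qed.

Lemma simq_refl (Om : Type) (q : opset Om) x : simq q x x.
Proof. by move=> k phi c. Qed.

Lemma simq_sym (Om : Type) (q : opset Om) x y : simq q x y -> simq q y x.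
Proof. by move=> H k phi c; have := H k phi c; tauto. Qed.

Lemma simq_rel (Om : Type) (q : opset Om) k (R : relk Om k) :
  q (ORel k R) -> rel_inv (simq q) R.
Proof.
move=> HR.
have step : forall (t : k.-tuple Om) (i : 'I_k) x y, simq q x y ->
    R [tuple (if m == i then x else tnth t m) | m < k] ->
    R [tuple (if m == i then y else tnth t m) | m < k].
  move=> t i x y Hxy.
  pose args : k.-tuple (unit + 'I_k) := [tuple (if m == i then inl tt else inr m) | m < k].
  have E z : map_tuple (sumas (fun _ : unit => z) (tnth t)) args =
             [tuple (if m == i then z else tnth t m) | m < k].
    by apply: eq_from_tnth => m; rewrite tnth_map !tnth_mktuple; case: (m == i).
  have := Hxy k (FAtom HR args) t; rewrite /= !E; tauto.
move=> a b Hab.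
pose mix j := [tuple (if (m < j)%N then tnth b m else tnth a m) | m < k].
have claim : forall j, (j <= k)%N -> (R a <-> R (mix j)).
  elim=> [_|j IHj Hj].
  - have -> : mix 0 = a by apply: eq_from_tnth => m; rewrite tnth_mktuple ltn0.
    tauto.
  - have Hj' : (j < k)%N by [].
    pose o := Ordinal Hj'.
    have E1 : [tuple (if m == o then tnth a o else tnth (mix j) m) | m < k] = mix j.
      apply: eq_from_tnth => m; rewrite !tnth_mktuple.
      case: (eqVneq m o) => [->|//]; rewrite ?tnth_mktuple ?ltnn //.
    have E2 : [tuple (if m == o then tnth b o else tnth (mix j) m) | m < k] = mix j.+1.
      apply: eq_from_tnth => m; rewrite !tnth_mktuple.
      case: (eqVneq m o) => [->|ne]; first by rewrite ltnSn.
      have nej : (m : nat) != j.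
        by apply: contra ne => /eqP e; apply/eqP/val_inj.
      by rewrite ?tnth_mktuple (ltnS m j) [(m <= j)%N]leq_eqVlt (negbTE nej).
    have := IHj (ltnW Hj).
    have := step (mix j) o (tnth a o) (tnth b o) (Hab o); rewrite E1 E2.
    have := step (mix j) o (tnth b o) (tnth a o) (@simq_sym _ _ _ _ (Hab o)); rewrite E1 E2.
    tauto.
have -> : b = mix k by apply: eq_from_tnth => m; rewrite tnth_mktuple ltn_ord.
exact: claim.
Qed.

Lemma simq_Sim (Om : Type) (q : opset Om) : Sim q (simq q).
Proof.
split; first by split=> x; exists x; exact: simq_refl.
split; first by move=> k R HR; exact: simq_rel.
move=> l ks Q _ Rs Ss _ _ Hrs.
have -> : Rs = Ss; last by [].
apply: functional_extensionality_dep => i; apply: functional_extensionality => a.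
apply: propositional_extensionality; apply: Hrs => m; exact: simq_refl.
Qed.

Theorem proposition15 (Om : Type) (q : opset Om)
  (Pi : (Om -> Om -> Prop) -> Prop) (HPi : monoid_inv Pi) :
  (Pi (approxP Pi) -> forall a b : Om, approxP Pi a b <-> simq (Inv Pi) a b) /\
  (forall a b : Om, simq q a b <-> approxP (Sim q) a b).
Proof.
case: HPi => [Hsim [Hcomp Hconv]].
split.
- move=> HA.
  have [rho [Prho Hrho]] : exists rho, Pi rho /\ forall x, rho x x.
    exists (rcomp (approxP Pi) (rconv (approxP Pi))); split.
      by apply: Hcomp => //; apply: Hconv.
    move=> x; have [f1 _] := Hsim _ HA; have [y Hy] := f1 x; by exists y.
  have Arefl : forall x, approxP Pi x x.
    by move=> x k c; exists rho; split => // i; exact: Hrho.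
  move=> a b; split.
  + move=> Hab k phi c; have [pi [Ppi Hpi]] := Hab k c.
    apply: (@sat_inv Om (Inv Pi) Pi (approxP Pi) Hsim _ _ HA Arefl _ phi pi Ppi).
    * by move=> p Pp k0 R0 H0; exact: H0 p Pp.
    * by move=> p Pp l ks Q H0; exact: H0 p Pp.
    * by apply/reltup_cons.
  + move=> Hab k c.
    pose R := fun t : (k.+1).-tuple Om => exists pi, Pi pi /\ reltup pi t [tuple of a :: c].
    have HR : Inv Pi (ORel k.+1 R).
      move=> r Pr t t' Htt'; split => -[pi [Ppi H]].
      - exists (rcomp (rconv r) pi); split; first by apply: Hcomp => //; exact: Hconv.
        by move=> i; exists (tnth t i); split; [exact: Htt' i | exact: H i].
      - exists (rcomp r pi); split; first by apply: Hcomp.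
        by move=> i; exists (tnth t' i); split; [exact: Htt' i | exact: H i].
    pose args : (k.+1).-tuple (unit + 'I_k) := [tuple sarg i | i < k.+1].
    have E z : map_tuple (sumas (fun _ : unit => z) (tnth c)) args = [tuple of z :: c].
      by apply: eq_from_tnth => i; rewrite tnth_map tnth_mktuple tnth_cons_split.
    have := Hab k (FAtom HR args) c; rewrite /= !E => H.
    have [pi [Ppi Hpi]] : R [tuple of b :: c].
      by apply/H; exists rho; split => // i; exact: Hrho.
    by exists (rconv pi); split; [exact: Hconv | move=> i; exact: Hpi i].
- move=> a b; split.
  + move=> Hab k c; exists (simq q); split; first exact: simq_Sim.
    by apply/reltup_cons => -[[]|j] /=; [exact: Hab | exact: simq_refl].
  + move=> Hab k phi c; have [pi [Ppi Hpi]] := Hab k c.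
    refine (@sat_inv Om q (Sim q) (simq q) _ _ _ (@simq_Sim _ q) (@simq_refl _ q) _ phi pi Ppi _ _ _).
    * by move=> p [H _].
    * by move=> p [_ [H _]].
    * by move=> p [_ [_ H]].
    * by apply/reltup_cons.
Qed.
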